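(* For every $n\in\{2,6,10,\dots\}$, every maximal increasing path of $f_n$ starting at the origin $(0,\dots,0)$ ends at the all-ones vertex $(1,1,\dots,1)$. Equivalently, the only local maximum of $f_n$ reachable from the origin by local search is $(1,\dots,1)$.
   Context: For $n\in\{2,6,10,\dots\}$ define polynomials $f_n$ in variables $x_1,\dots,x_n$ (evaluated on $\{0,1\}^n$) recursively. Set $f_2(x_1,x_2):=x_1+x_2$. For $n\in\{2,6,10,\dots\}$, write $\mathbf{x}=(x_1,\dots,x_n)$, $S:=\sum_{i=1}^n x_i$, let $M_n:=\max_{\{0,1\}^n} f_n-\min_{\{0,1\}^n} f_n+1$, and define $f_{n+4}(\mathbf{x},x_{n+1},x_{n+2},x_{n+3},x_{n+4}) := f_n(\mathbf{x}) - M_n n^2 x_{n+1} + M_n(n+1) S x_{n+1} - x_{n+2} - 2M_n n S x_{n+2} + 2M_n n(n+2) x_{n+1}x_{n+2} - 4 S x_{n+3} + 2x_{n+1}x_{n+3} + 2x_{n+2}x_{n+3} - 3x_{n+3} + (M_n(n-1)+4) S x_{n+4} + 6M_n n^2 x_{n+3}x_{n+4} - 5M_n n^2 x_{n+4}$. For a function $f:\{0,1\}^m\to\mathbb{R}$, an increasing path is a sequence of vertices $v_0,v_1,\dots,v_k$ of $\{0,1\}^m$ such that consecutive vertices differ in exactly one coordinate and $f(v_{j+1})>f(v_j)$ for all $j$. It is maximal if it cannot be extended, i.e. its last vertex is a local maximum (no neighbor has strictly larger value). The length of the path is $k$. *)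

(* Defs.v *)
From mathcomp Require Import all_boot all_order all_algebra.
Set Implicit Arguments. Unset Strict Implicit. Unset Printing Implicit Defensive.
Import Order.TTheory GRing.Theory Num.Theory.
Local Open Scope ring_scope.

(* The polynomials f_n, n = 4k+2, are indexed by k.  A point of {0,1}^n is
   encoded as a bit sequence x; coordinate x_i (1-based) is nth false x (i-1),
   read as the integer 0 or 1. *)

Definition dimn (k : nat) : nat := (4 * k + 2)%N.

Definition xi (x : seq bool) (i : nat) : int := (nth false x i.-1 : nat)%:Z.

Definition Ssum (n : nat) (x : seq bool) : int := \sum_(1 <= i < n.+1) xi x i.

Definition Mof (n : nat) (f : seq bool -> int) : int :=
  let o := f (nseq n false) in
  (\big[Num.max/o]_(v : n.-tuple bool) f v) - (\big[Num.min/o]_(v : n.-tuple bool) f v) + 1.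

Fixpoint fk (k : nat) : seq bool -> int :=
  match k with
  | O => fun x => xi x 1 + xi x 2
  | k'.+1 =>
      let n := dimn k' in
      let g := fk k' in
      let M := Mof n g in
      let nz : int := n%:Z in
      fun x =>
        let S := Ssum n x in
        let a := xi x n.+1 in
        let b := xi x n.+2 in
        let c := xi x n.+3 in
        let d := xi x n.+4 in
        g (take n x) - M * nz ^+ 2 * a + M * (nz + 1) * S * a - b
        - 2 * M * nz * S * b + 2 * M * nz * (nz + 2) * a * b
        - 4 * S * c + 2 * a * c + 2 * b * c - 3 * c
        + (M * (nz - 1) + 4) * S * d + 6 * M * nz ^+ 2 * c * d
        - 5 * M * nz ^+ 2 * d
  end.

Definition fn (k : nat) (v : (dimn k).-tuple bool) : int := fk k v.

Definition adj (m : nat) (u v : m.-tuple bool) : bool :=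
  #|[set i : 'I_m | tnth u i != tnth v i]| == 1%N.

Definition incr_step (m : nat) (f : m.-tuple bool -> int) (u v : m.-tuple bool) : bool :=
  adj u v && (f u < f v).

Definition increasing_path (m : nat) (f : m.-tuple bool -> int)
  (v0 : m.-tuple bool) (vs : seq (m.-tuple bool)) : bool :=
  path (incr_step f) v0 vs.

Definition local_max (m : nat) (f : m.-tuple bool -> int) (v : m.-tuple bool) : Prop :=
  forall w : m.-tuple bool, adj v w -> f w <= f v.

Definition maximal_increasing_path (m : nat) (f : m.-tuple bool -> int)
  (v0 : m.-tuple bool) (vs : seq (m.-tuple bool)) : Prop :=
  increasing_path f v0 vs /\ local_max f (last v0 vs).

Definition origin (m : nat) : m.-tuple bool := [tuple of nseq m false].
Definition ones (m : nat) : m.-tuple bool := [tuple of nseq m true].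

(* Main.v *)
Require Import Defs.
From mathcomp Require Import all_boot all_order all_algebra zify ring lra.
Set Implicit Arguments. Unset Strict Implicit. Unset Printing Implicit Defensive.
Import Order.TTheory GRing.Theory Num.Theory.
Local Open Scope ring_scope.

Definition b2i (b : bool) : int := (b : nat)%:Z.
Fixpoint ssum (x : seq bool) : int := if x is a :: x' then b2i a + ssum x' else 0.
Fixpoint ndiff (u v : seq bool) : nat :=
  match u, v with a :: u', b :: v' => ((a != b) + ndiff u' v')%N | _, _ => 0%N end.

Definition Mk k := Mof (dimn k) (fk k).
Definition Nk k : int := (dimn k)%:Z.
Definition Aof k a b c d : int := let M := Mk k in let N := Nk k in
  0 - M * (N * N) * b2i a - b2i b + 2 * M * N * (N + 2) * b2i a * b2i b
  + 2 * b2i a * b2i c + 2 * b2i b * b2i c - 3 * b2i c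
  + 6 * M * (N * N) * b2i c * b2i d - 5 * M * (N * N) * b2i d.
Definition Cof k a b c d : int := let M := Mk k in let N := Nk k in
  M * (N + 1) * b2i a - 2 * M * N * b2i b - 4 * b2i c + (M * (N - 1) + 4) * b2i d.

Lemma xi_catS n x s j : size x = n -> (n <= j)%N -> xi (x ++ s) j.+1 = b2i (nth false s (j - n)).
Proof. by move=> Hx hj; rewrite /xi /= nth_cat Hx ltnNge hj. Qed.

Lemma xi_catS' n x s j : size x = n -> xi (x ++ s) (n + j).+1 = b2i (nth false s j).
Proof. by move=> Hx; rewrite (@xi_catS n x s _ Hx) ?leq_addr // addKn. Qed.

Lemma sum_ssum x : \sum_(0 <= i < size x) b2i (nth false x i) = ssum x.
Proof.
elim: x => [|a x IH] /=; first by rewrite big_mkord big_ord0.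
by rewrite big_nat_recl //= IH.
Qed.


Lemma Ssum_cat n x s : size x = n -> Ssum n (x ++ s) = ssum x.
Proof.
move=> Hx; rewrite /Ssum big_add1 /= -sum_ssum Hx.
apply: eq_big_nat => i /andP [_ hi].
by rewrite /xi /b2i /= nth_cat Hx hi.
Qed.


Lemma fcat k x a b c d : size x = dimn k ->
  fk k.+1 (x ++ [:: a; b; c; d]) = fk k x + Aof k a b c d + Cof k a b c d * ssum x.
Proof.
move=> Hx.
have e1 : xi (x ++ [:: a; b; c; d]) (dimn k).+1 = b2i a.
  by have := @xi_catS' (dimn k) x [:: a; b; c; d] 0 Hx; rewrite addn0.
have e2 : xi (x ++ [:: a; b; c; d]) (dimn k).+2 = b2i b.
  by have := @xi_catS' (dimn k) x [:: a; b; c; d] 1 Hx; rewrite addn1.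
have e3 : xi (x ++ [:: a; b; c; d]) (dimn k).+3 = b2i c.
  by have := @xi_catS' (dimn k) x [:: a; b; c; d] 2 Hx; rewrite addn2.
have e4 : xi (x ++ [:: a; b; c; d]) (dimn k).+4 = b2i d.
  by have := @xi_catS' (dimn k) x [:: a; b; c; d] 3 Hx; rewrite addn3.
rewrite [fk _.+1]/=; cbv beta; rewrite e1 e2 e3 e4 (Ssum_cat _ Hx) (take_size_cat _ Hx).
rewrite /Aof /Cof /Mk /Nk /=.
move: (Mof _ _) (ssum x) (fk k x) (b2i a) (b2i b) (b2i c) (b2i d) => M S F A B C D.
clear; move: ((dimn k)%:Z) => N.
ring.
Qed.


Lemma ndiff_cat x y p q : size x = size y ->
  ndiff (x ++ p) (y ++ q) = (ndiff x y + ndiff p q)%N.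
Proof.
elim: x y => [|a x IH] [|b y] //= [] /IH ->; by rewrite addnA.
Qed.

Lemma ndiff0 x y : size x = size y -> ndiff x y = 0%N -> x = y.
Proof.
elim: x y => [|a x IH] [|b y] //= [] /IH H.
by case: a; case: b => //= /H ->.
Qed.

Lemma ndiff_sym x y : ndiff x y = ndiff y x.
Proof. by elim: x y => [|a x IH] [|b y] //=; rewrite IH eq_sym. Qed.

Lemma ssum_ge0 x : 0 <= ssum x.
Proof. elim: x => [|a x IH] //=; rewrite /b2i; case: a => /=; lia. Qed.

Lemma ssum_le x : ssum x <= (size x)%:Z.
Proof. elim: x => [|a x IH] //=; rewrite /b2i; case: a => /=; lia. Qed.

Lemma ndiff_ssum x y : size x = size y -> ndiff x y = 1%N ->
  ssum y = ssum x + 1 \/ ssum y = ssum x - 1.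
Proof.
elim: x y => [|a x IH] [|b y] //= [] Hs.
case: a; case: b => /=; rewrite /b2i /=.
- by move/IH => /(_ Hs) [] ->; [left|right]; lia.
- by move=> [] /(ndiff0 Hs) ->; right; lia.
- by move=> [] /(ndiff0 Hs) ->; left; lia.
- by move/IH => /(_ Hs) [] ->; [left|right]; lia.
Qed.

Lemma ssum_full x : ssum x = (size x)%:Z -> x = nseq (size x) true.
Proof.
elim: x => [|a x IH] //=; rewrite /b2i; case: a => /= H.
  by congr (_ :: _); apply: IH; lia.
by have := ssum_le x; lia.
Qed.

Lemma ssum_zero x : ssum x = 0 -> x = nseq (size x) false.
Proof.
elim: x => [|a x IH] //=; rewrite /b2i; case: a => /= H.
  by have := ssum_ge0 x; lia.
by congr (_ :: _); apply: IH; lia.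
Qed.

Lemma exists_down x : x <> nseq (size x) false ->
  exists y, [/\ size y = size x, ndiff x y = 1%N & ssum y = ssum x - 1].
Proof.
elim: x => [|a x IH] //= H.
case: a H => H.
  exists (false :: x); split => //=.
    by rewrite (_ : ndiff x x = 0%N) //; elim: x {IH H} => //= a x ->; rewrite eqxx.
  rewrite /b2i /=; lia.
have [y [H1 H2 H3]] : exists y, [/\ size y = size x, ndiff x y = 1%N & ssum y = ssum x - 1].
  by apply: IH => E; apply: H; rewrite -E.
by exists (false :: y); split; rewrite /= ?H1 ?H2 ?H3 /b2i /=; lia.
Qed.

Lemma sum_ndiff m (u v : seq bool) : size u = m -> size v = m ->
  (\sum_(i < m) (nth false u i != nth false v i))%N = ndiff u v.
Proof.
elim: u v m => [|a u IH] [|b v] m /= Hu Hv; subst m => //.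
- by rewrite big_ord0.
rewrite (big_ord_recl (size u)) /=; congr (_ + _)%N.
by apply: IH => //; case: Hv.
Qed.

Lemma adj_ndiff m (u v : m.-tuple bool) : adj u v = (ndiff u v == 1%N).
Proof.
rewrite /adj -sum1dep_card big_mkcond /= -(@sum_ndiff m) ?size_tuple //.
congr (_ == _); apply: eq_bigr => i _; rewrite !(tnth_nth false).
by case: (_ != _).
Qed.

Lemma bigmax_ge (T : eqType) (r : seq T) (F : T -> int) o i : i \in r ->
  F i <= \big[Num.max/o]_(j <- r) F j.
Proof.
elim: r => [//|j r IH]; rewrite big_cons in_cons => /orP [/eqP->|/IH h].
  by rewrite le_max lexx.
by rewrite le_max h orbT.
Qed.

Lemma bigmin_le (T : eqType) (r : seq T) (F : T -> int) o i : i \in r ->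
  \big[Num.min/o]_(j <- r) F j <= F i.
Proof.
elim: r => [//|j r IH]; rewrite big_cons in_cons => /orP [/eqP->|/IH h].
  by rewrite ge_min lexx.
by rewrite ge_min h orbT.
Qed.

Lemma gbound k u v : size u = dimn k -> size v = dimn k ->
  fk k u - fk k v <= Mk k - 1.
Proof.
move=> Hu Hv.
pose tu : (dimn k).-tuple bool := Tuple (introT eqP Hu).
pose tv : (dimn k).-tuple bool := Tuple (introT eqP Hv).
have h1 := @bigmax_ge _ (index_enum ((dimn k).-tuple bool)) (fun t => fk k t) (fk k (nseq (dimn k) false)) tu (mem_index_enum _).
have h2 := @bigmin_le _ (index_enum ((dimn k).-tuple bool)) (fun t => fk k t) (fk k (nseq (dimn k) false)) tv (mem_index_enum _).
rewrite /Mk /Mof /=.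
move: h1 h2; rewrite /=.
move: (\big[_/_]_(_ <- _) _) (\big[_/_]_(_ <- _) _) => X Y.
move: (fk k u) (fk k v) => U V; lia.
Qed.

Lemma dimnS k : dimn k.+1 = (dimn k + 4)%N.
Proof. rewrite /dimn; lia. Qed.

Lemma size_cat4 k (x : seq bool) a b c d : size x = dimn k -> size (x ++ [:: a; b; c; d]) = dimn k.+1.
Proof. by move=> Hx; rewrite size_cat Hx dimnS. Qed.

Lemma split4 k (u : seq bool) : size u = dimn k.+1 ->
  exists x a b c d, size x = dimn k /\ u = x ++ [:: a; b; c; d].
Proof.
rewrite dimnS => Hu.
have Hd : size (drop (dimn k) u) = 4%N by rewrite size_drop Hu addKn.
exists (take (dimn k) u).
move: (cat_take_drop (dimn k) u) Hd.
case: (drop _ u) => [|a [|b [|c [|d [|e s]]]]] //= E _.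
exists a, b, c, d; split; last by rewrite E.
by rewrite size_take Hu; case: ifP => //; lia.
Qed.

Fixpoint Ik (k : nat) : seq bool -> bool :=
  match k with
  | O => fun _ => true
  | k'.+1 => fun u =>
    let n := dimn k' in let x := take n u in let p := drop n u in
    [|| Ik k' x && (p == [:: false; false; false; false]),
        (x == nseq n true) && (p == [:: true; false; false; false]),
        p == [:: true; true; false; false],
        (x == nseq n false) && (p == [:: true; true; true; false]) |
        Ik k' x && (p == [:: true; true; true; true])]
  end.

Lemma Ik_cat k x p : size x = dimn k -> Ik k.+1 (x ++ p) =
    [|| Ik k x && (p == [:: false; false; false; false]),
        (x == nseq (dimn k) true) && (p == [:: true; false; false; false]),
        p == [:: true; true; false; false],
        (x == nseq (dimn k) false) && (p == [:: true; true; true; false]) |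
        Ik k x && (p == [:: true; true; true; true])].
Proof. by move=> Hx; rewrite /= take_size_cat // drop_size_cat. Qed.

Lemma Ik_split k (x : seq bool) a b c d : size x = dimn k -> Ik k.+1 (x ++ [:: a; b; c; d]) ->
  (Ik k x /\ [:: a; b; c; d] = [:: false; false; false; false]) \/
  (x = nseq (dimn k) true /\ [:: a; b; c; d] = [:: true; false; false; false]) \/
  ([:: a; b; c; d] = [:: true; true; false; false]) \/
  (x = nseq (dimn k) false /\ [:: a; b; c; d] = [:: true; true; true; false]) \/
  (Ik k x /\ [:: a; b; c; d] = [:: true; true; true; true]).
Proof.
move=> Hx; rewrite Ik_cat //.
case/orP => [/andP [h /eqP e]|]; first by left.
case/orP => [/andP [/eqP h /eqP e]|]; first by right; left.
case/orP => [/eqP e|]; first by right; right; left.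
case/orP => [/andP [/eqP h /eqP e]|/andP [h /eqP e]]; first by right; right; right; left.
by right; right; right; right.
Qed.

Lemma Ik_in0 k x : size x = dimn k -> Ik k x -> Ik k.+1 (x ++ [:: false; false; false; false]).
Proof. by move=> Hx h; rewrite Ik_cat // h. Qed.
Lemma Ik_in1 k x : size x = dimn k -> x = nseq (dimn k) true -> Ik k.+1 (x ++ [:: true; false; false; false]).
Proof. by move=> Hx h; rewrite Ik_cat // h eqxx /= orbT. Qed.
Lemma Ik_in2 k x : size x = dimn k -> Ik k.+1 (x ++ [:: true; true; false; false]).
Proof. by move=> Hx; rewrite Ik_cat // eqxx /= !orbT. Qed.
Lemma Ik_in3 k x : size x = dimn k -> x = nseq (dimn k) false -> Ik k.+1 (x ++ [:: true; true; true; false]).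
Proof. by move=> Hx h; rewrite Ik_cat // h eqxx /= !orbT. Qed.
Lemma Ik_in4 k x : size x = dimn k -> Ik k x -> Ik k.+1 (x ++ [:: true; true; true; true]).
Proof. by move=> Hx h; rewrite Ik_cat // h /= !orbT. Qed.

Lemma ssum_nseq m b : ssum (nseq m b) = (m * b)%N%:Z.
Proof. case: b; elim: m => [|m IH] //=; rewrite IH /b2i /=; lia. Qed.

Lemma facts k : 1 <= Mk k /\ 2 <= Nk k.
Proof.
have h := @gbound k (nseq (dimn k) false) (nseq (dimn k) false) (size_nseq _ _) (size_nseq _ _).
split; first lia.
rewrite /Nk /dimn; lia.
Qed.

Lemma prods (M N S : int) : 1 <= M -> 2 <= N -> 0 <= S -> S <= N ->
  [/\ 0 <= M * S, M * S <= M * N, 0 <= M * N * S, M * N * S <= M * N * N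
    & [/\ 2 * M <= M * N, 2 * M * N <= M * N * N & N <= M * N]].
Proof.
move=> hM hN hS0 hSN.
have h1 : 0 <= M * S by apply: mulr_ge0; lia.
have h2 : M * S <= M * N by apply: ler_wpM2l; lia.
have h5 : 2 * M <= M * N by rewrite mulrC; apply: ler_wpM2l; lia.
have h3 : 0 <= M * N * S by apply: mulr_ge0; lia.
have h4 : M * N * S <= M * N * N by apply: ler_wpM2l; lia.
have h6 : 2 * M * N <= M * N * N by apply: ler_wpM2r; lia.
have h7 : N <= M * N by rewrite -{1}(mul1r N); apply: ler_wpM2r; lia.
by split.
Qed.

Arguments Ik : simpl never.
Ltac caseB a' b' c' d' := case: a'; case: b'; case: c'; case: d';
  rewrite /Aof /Cof /b2i /=; intros;
  first [ by apply: Ik_in2 | by apply: Ik_in0 | by apply: Ik_in4 | exfalso; lia | idtac ].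

Lemma closure_step k :
 (forall u v, size u = dimn k -> size v = dimn k -> Ik k u -> ndiff u v = 1%N ->
    fk k u < fk k v -> Ik k v) ->
 Ik k (nseq (dimn k) false) ->
 forall u v, size u = dimn k.+1 -> size v = dimn k.+1 -> Ik k.+1 u ->
   ndiff u v = 1%N -> fk k.+1 u < fk k.+1 v -> Ik k.+1 v.
Proof.
move=> IH2 IH1 u v Hu Hv Hin Hd Hf.
have [hM hN] := facts k.
case: (split4 Hu) => x [a [b [c [d [Hx Eu]]]]]; subst u.
case: (split4 Hv) => y [a' [b' [c' [d' [Hy Ev]]]]]; subst v; clear Hu Hv.
move: Hd; rewrite ndiff_cat ?Hx ?Hy // => Hd.
move: Hf; rewrite !fcat // => Hf.
have gxy := gbound Hx Hy; have gyx := gbound Hy Hx.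
have Sx0 := ssum_ge0 x; have SxN : ssum x <= Nk k by rewrite /Nk -Hx; apply: ssum_le.
have Sy0 := ssum_ge0 y; have SyN : ssum y <= Nk k by rewrite /Nk -Hy; apply: ssum_le.
have [P1 P2 P3 P4 [P5 P6 P7]] := prods hM hN Sx0 SxN.
have Hxy : size x = size y by rewrite Hx Hy.
case E: (ndiff x y) Hd => [|m] Hd.
- have exy := ndiff0 Hxy E; subst y.
  move: Hin Hd Hf.
  case/(Ik_split Hx) => [[h [-> -> -> ->]]|[[h [-> -> -> ->]]|[[-> -> -> ->]|[[h [-> -> -> ->]]|[h [-> -> -> ->]]]]]].
  + caseB a' b' c' d'.
    apply: Ik_in1 => //.
    have SN : Nk k <= ssum x.
      case: (lerP (Nk k) (ssum x)) => // hlt.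
      have h1 : ssum x <= Nk k - 1 by lia.
      have h2 : Mk k * ssum x <= Mk k * (Nk k - 1) by apply: ler_wpM2l; lia.
      have h3 : Mk k * Nk k * ssum x <= Mk k * Nk k * (Nk k - 1) by apply: ler_wpM2l; lia.
      lia.
    by rewrite -Hx; apply: ssum_full; rewrite Hx /Nk in SN SxN *; lia.
  + have Sx : ssum x = Nk k by rewrite h ssum_nseq muln1.
    move=> Hd Hf; rewrite Sx in Hf; move: Hd Hf; caseB a' b' c' d'.
  + caseB a' b' c' d'.
    apply: Ik_in3 => //.
    have S0 : ssum x = 0 by lia.
    by rewrite -Hx; apply: ssum_zero.
  + have Sx : ssum x = 0 by rewrite h ssum_nseq muln0.
    move=> Hd Hf; rewrite Sx in Hf; move: Hd Hf; caseB a' b' c' d'.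
    by apply: Ik_in4 => //; rewrite h.
  + caseB a' b' c' d'.
- case: m E Hd => [|m] E Hd; last by exfalso; lia.
  have Epq : [:: a; b; c; d] = [:: a'; b'; c'; d'] by apply: ndiff0 => //; lia.
  case: Epq => Ea Eb Ec Ed; subst a' b' c' d'.
  have Sd := ndiff_ssum Hxy E.
  move: Hin Hf.
  case/(Ik_split Hx) => [[h [-> -> -> ->]]|[[h [-> -> -> ->]]|[[-> -> -> ->]|[[h [-> -> -> ->]]|[h [-> -> -> ->]]]]]];
    rewrite /Aof /Cof /b2i /= => Hf.
  + by apply: Ik_in0 => //; apply: (IH2 x) => //; lia.
  + exfalso; have Sx : ssum x = Nk k by rewrite h ssum_nseq muln1.
    by case: Sd => Sy; rewrite Sy Sx in Hf; rewrite Sx in Sy; lia.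
  + by apply: Ik_in2.
  + exfalso; have Sx : ssum x = 0 by rewrite h ssum_nseq muln0.
    by case: Sd => Sy; rewrite Sy Sx in Hf; rewrite Sx in Sy; lia.
  + by apply: Ik_in4 => //; apply: (IH2 x) => //; lia.
Qed.

Lemma ndiff_refl x : ndiff x x = 0%N.
Proof. by elim: x => //= a x ->; rewrite eqxx. Qed.

Lemma lmax_step k :
 (forall u, size u = dimn k -> Ik k u ->
    (forall v, size v = dimn k -> ndiff u v = 1%N -> fk k v <= fk k u) -> u = nseq (dimn k) true) ->
 forall u, size u = dimn k.+1 -> Ik k.+1 u ->
    (forall v, size v = dimn k.+1 -> ndiff u v = 1%N -> fk k.+1 v <= fk k.+1 u) ->
    u = nseq (dimn k.+1) true.
Proof.
move=> IH3 u Hu Hin Hmax.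
have [hM hN] := facts k.
case: (split4 Hu) => x [a [b [c [d [Hx Eu]]]]]; subst u; clear Hu.
have Hq : forall a' b' c' d', ndiff [:: a; b; c; d] [:: a'; b'; c'; d'] = 1%N ->
    fk k.+1 (x ++ [:: a'; b'; c'; d']) <= fk k.+1 (x ++ [:: a; b; c; d]).
  move=> a' b' c' d' H; apply: Hmax; first exact: size_cat4.
  by rewrite ndiff_cat // ndiff_refl.
have Hy : forall y, size y = dimn k -> ndiff x y = 1%N ->
    fk k.+1 (y ++ [:: a; b; c; d]) <= fk k.+1 (x ++ [:: a; b; c; d]).
  move=> y Hy' H; apply: Hmax; first exact: size_cat4.
  by rewrite ndiff_cat ?Hx ?Hy' // ndiff_refl H.
have Sx0 := ssum_ge0 x; have SxN : ssum x <= Nk k by rewrite /Nk -Hx; apply: ssum_le.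
have [P1 P2 P3 P4 [P5 P6 P7]] := prods hM hN Sx0 SxN.
case/(Ik_split Hx): Hin => [[h [Ea Eb Ec Ed]]|[[h [Ea Eb Ec Ed]]|[[Ea Eb Ec Ed]|[[h [Ea Eb Ec Ed]]|[h [Ea Eb Ec Ed]]]]]];
  subst a b c d.
- have xl : x = nseq (dimn k) true.
    apply: IH3 => // y Hy' Hd; move: (Hy y Hy' Hd).
    by rewrite !fcat // /Aof /Cof /b2i /=; lia.
  have Sx : ssum x = Nk k by rewrite xl ssum_nseq muln1.
  exfalso; move: (Hq true false false false erefl).
  by rewrite !fcat // /Aof /Cof /b2i /= Sx; lia.
- have Sx : ssum x = Nk k by rewrite h ssum_nseq muln1.
  exfalso; move: (Hq true true false false erefl).
  by rewrite !fcat // /Aof /Cof /b2i /= Sx; lia.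
- exfalso; case: (x =P nseq (dimn k) false) => [h|h].
    have Sx : ssum x = 0 by rewrite h ssum_nseq muln0.
    move: (Hq true true true false erefl).
    by rewrite !fcat // /Aof /Cof /b2i /= Sx; lia.
  have [y [H1 H2 H3]] : exists y, [/\ size y = size x, ndiff x y = 1%N & ssum y = ssum x - 1].
    by apply: exists_down; rewrite Hx.
  rewrite Hx in H1.
  have g := gbound Hx H1.
  move: (Hy y H1 H2).
  by rewrite !fcat // /Aof /Cof /b2i /= H3; lia.
- have Sx : ssum x = 0 by rewrite h ssum_nseq muln0.
  exfalso; move: (Hq true true true true erefl).
  by rewrite !fcat // /Aof /Cof /b2i /= Sx; lia.
- have xl : x = nseq (dimn k) true.
    apply: IH3 => // y Hy' Hd; move: (Hy y Hy' Hd).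
    by rewrite !fcat // /Aof /Cof /b2i /=; lia.
  by rewrite xl dimnS nseqD.
Qed.

Lemma main k :
  [/\ Ik k (nseq (dimn k) false),
     (forall u v, size u = dimn k -> size v = dimn k -> Ik k u -> ndiff u v = 1%N ->
        fk k u < fk k v -> Ik k v) &
     (forall u, size u = dimn k -> Ik k u ->
        (forall v, size v = dimn k -> ndiff u v = 1%N -> fk k v <= fk k u) ->
        u = nseq (dimn k) true)].
Proof.
elim: k => [|k [IH1 IH2 IH3]].
  split => // u Hu _ Hmax.
  case: u Hu Hmax => [|a [|b []]] // _ Hmax.
  case: a Hmax; case: b => Hmax //; exfalso.
  - by move: (Hmax [:: true; true] erefl erefl); rewrite /= /xi /=; lia.
  - by move: (Hmax [:: true; true] erefl erefl); rewrite /= /xi /=; lia.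
  - by move: (Hmax [:: true; false] erefl erefl); rewrite /= /xi /=; lia.
split.
- by rewrite dimnS nseqD; apply: Ik_in0 => //; rewrite size_nseq.
- exact: closure_step.
- exact: lmax_step.
Qed.

Theorem lemma2 (k : nat) (vs : seq ((dimn k).-tuple bool)) :
  maximal_increasing_path (@fn k) (origin (dimn k)) vs ->
  last (origin (dimn k)) vs = ones (dimn k).
Proof.
move=> [Hp Hl]; have [I1 I2 I3] := main k.
have Hlast : forall (v0 : (dimn k).-tuple bool) ws, Ik k v0 ->
    path (incr_step (@fn k)) v0 ws -> Ik k (last v0 ws).
  move=> v0 ws; elim: ws v0 => [//|w ws IH] v0 h /= /andP [/andP [hadj hlt] hp].
  apply: IH hp; apply: (I2 v0) => //; rewrite ?size_tuple //.
  by apply/eqP; rewrite -adj_ndiff.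
apply: val_inj => /=.
apply: I3; first by rewrite size_tuple.
  by apply: Hlast Hp.
move=> v Hv Hd.
pose tv : (dimn k).-tuple bool := Tuple (introT eqP Hv).
have := Hl tv; rewrite adj_ndiff /= Hd => /(_ erefl).
by [].
Qed.
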